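(* Let $G$ and $H$ be connected graphs, not both complete, with $|V(G)|=s$, $|V(H)|=t$, $s\le t$ (and $t\ge 3$). Let $c_1=\max\{rx_3(G),rx_3(H)\}$ when both are defined. Then: (1) if $s=1$, then $rx_3(G\vee H)\le rx_3(H)+1$; (2) if $s=2$, then $rx_3(G\vee H)\le\min\{rc(H)+3,\ rx_3(K_{2,t})\}$; (3) if $3\le s\le t$, then $rx_3(G\vee H)\le\min\{c_1+1,\ rx_3(K_{s,t})\}$. In particular, if $s=t\ge 3$, then $rx_3(G\vee H)=rx_3(K_{s,t})=3$.
   Context: The join $G\vee H$ is obtained from the disjoint union of $G$ and $H$ by adding all edges joining every vertex of $G$ to every vertex of $H$. $K_{s,t}$ is the complete bipartite graph with parts of sizes $s,t$. An edge coloring may give adjacent edges the same color; a path (tree) is rainbow if its edges have pairwise distinct colors. $rc(H)$ is the minimum number of colors in an edge coloring of $H$ such that every two vertices are joined by a rainbow path. For a connected graph on at least $3$ vertices, $rx_3$ is the minimum number of colors in an edge coloring such that every set of $3$ vertices lies in some rainbow tree. *)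

(* Defs.v *)
From Stdlib Require Import ClassicalEpsilon.
From mathcomp Require Import all_boot.
Set Implicit Arguments. Unset Strict Implicit. Unset Printing Implicit Defensive.

Definition simple_graph (T : finType) (g : rel T) : Prop :=
  irreflexive g /\ symmetric g.

Definition connected (T : finType) (g : rel T) : Prop :=
  forall x y : T, connect g x y.

Definition complete (T : finType) (g : rel T) : Prop :=
  forall x y : T, x != y -> g x y.

Definition join (T1 T2 : finType) (g : rel T1) (h : rel T2) : rel (T1 + T2) :=
  fun u v => match u, v with
             | inl x, inl y => g x y
             | inr x, inr y => h x y
             | _, _ => true
             end.

Definition Kbip (s t : nat) : rel ('I_s + 'I_t) :=
  fun u v => match u, v with
             | inl _, inr _ | inr _, inl _ => true
             | _, _ => false
             end.

Definition coloring (T : finType) (g : rel T) (c : T -> T -> nat) (k : nat) : Prop :=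
  (forall x y, c x y = c y x) /\ (forall x y, g x y -> c x y < k).

Definition rainbow_path (T : finType) (g : rel T) (c : T -> T -> nat)
    (x y : T) (p : seq T) : Prop :=
  [/\ path g x p, last x p = y, uniq (x :: p) & uniq (pairmap c x p)].

(* (V, f) is a rainbow tree subgraph of g: f is a symmetric subrelation of g
   with all edges inside V, connected on V, with #|V|-1 (unordered) edges,
   and distinct edges receive distinct colors. *)
Definition rainbow_tree (T : finType) (g : rel T) (c : T -> T -> nat)
    (V : {set T}) (f : rel T) : Prop :=
  [/\ (forall x y, f x y -> g x y) /\ symmetric f,
      (forall x y, f x y -> (x \in V) && (y \in V)),
      (forall x y, x \in V -> y \in V -> connect f x y),
      #|[set e : T * T | f e.1 e.2]| = 2 * (#|V| - 1)
    & (forall x y u v, f x y -> f u v -> c x y = c u v ->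
         (x = u /\ y = v) \/ (x = v /\ y = u))].

Definition rc_ok (T : finType) (g : rel T) (k : nat) : Prop :=
  exists c, coloring g c k /\
    forall x y : T, x != y -> exists p, rainbow_path g c x y p.

Definition rx3_ok (T : finType) (g : rel T) (k : nat) : Prop :=
  exists c, coloring g c k /\
    forall S : {set T}, #|S| = 3 ->
      exists (V : {set T}) (f : rel T), S \subset V /\ rainbow_tree g c V f.

(* Least natural number satisfying a Prop predicate (0 if none). *)
Definition pbool (P : Prop) : bool :=
  if excluded_middle_informative P then true else false.

Lemma ex_pbool (P : nat -> Prop) : (exists n, P n) -> exists n, pbool (P n).
Proof.
case=> n Pn; exists n; rewrite /pbool.
by case: (excluded_middle_informative (P n)).
Qed.

Definition least_nat (P : nat -> Prop) : nat :=
  match excluded_middle_informative (exists n, P n) with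
  | left h => ex_minn (ex_pbool h)
  | right _ => 0
  end.

Definition rc (T : finType) (g : rel T) : nat := least_nat (rc_ok g).
Definition rx3 (T : finType) (g : rel T) : nat := least_nat (rx3_ok g).
Arguments Kbip s t : clear implicits.

(* Main.v *)
Require Import Defs.
From Stdlib Require Import ClassicalEpsilon.
From mathcomp Require Import all_boot.
From mathcomp Require Import zify.
Set Implicit Arguments. Unset Strict Implicit. Unset Printing Implicit Defensive.

Lemma pboolE (P : Prop) : pbool P -> P.
Proof. by rewrite /pbool; case: (excluded_middle_informative P). Qed.
Lemma pboolI (P : Prop) : P -> pbool P.
Proof. by rewrite /pbool; case: (excluded_middle_informative P). Qed.

Lemma least_le (P : nat -> Prop) k : P k -> least_nat P <= k.
Proof.
move=> Pk; rewrite /least_nat; case: excluded_middle_informative => [h|[]]; last by exists k.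
case: ex_minnP => m _ /(_ k (pboolI Pk)); done.
Qed.

Lemma least_P (P : nat -> Prop) : (exists n, P n) -> P (least_nat P).
Proof.
move=> ex; rewrite /least_nat; case: excluded_middle_informative => [h|//].
by case: ex_minnP => m /pboolE.
Qed.

Definition tinv (T : finType) (g : rel T) (c : T -> T -> nat) (V : {set T}) (f : rel T)
  (K : nat -> bool) :=
  [/\ rainbow_tree g c V f, 0 < #|V| & forall x y, f x y -> K (c x y)].

Lemma tinv_weak (T : finType) (g : rel T) c V f (K K' : nat -> bool) :
  (forall n, K n -> K' n) -> tinv g c V f K -> tinv g c V f K'.
Proof. by move=> KK [t v h]; split=> // x y /h /KK. Qed.

Lemma tinv1 (T : finType) (g : rel T) c x K : tinv g c [set x] (fun _ _ => false) K.
Proof.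
split; rewrite ?cards1 //; split=> //.
- move=> u v; rewrite !inE => /eqP -> /eqP ->; exact: connect0.
- rewrite cards1 /=; apply/eqP; rewrite cards_eq0; apply/eqP/setP=> e; by rewrite !inE.
Qed.

Definition addleaf (T : finType) (f : rel T) (x z : T) : rel T :=
  fun u v => f u v || ((u == x) && (v == z)) || ((u == z) && (v == x)).

Lemma leaf (T : finType) (g : rel T) c V f (K : nat -> bool) x z :
  (forall u v, c u v = c v u) -> tinv g c V f K -> x \in V -> z \notin V -> g x z -> g z x ->
  ~~ K (c x z) ->
  tinv g c (z |: V) (addleaf f x z) (fun n => (n == c x z) || K n).
Proof.
move=> csym [[[fg fsym] fin fcon fcard finj] V0 fK] xV zV gxz gzx Kn.
have xz : x != z by apply: contraNneq zV => <-.
have fz : forall u, f u z = false by move=> u; apply/negP=> /fin /andP[_]; rewrite (negbTE zV).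
have fz' : forall u, f z u = false by move=> u; apply/negP=> /fin /andP[]; rewrite (negbTE zV).
have subc : forall u v, connect f u v -> connect (addleaf f x z) u v.
  apply: connect_sub => u v fuv; apply: connect1; by rewrite /addleaf fuv.
have czx : connect (addleaf f x z) z x by apply: connect1; rewrite /addleaf !eqxx orbT.
have cxz : connect (addleaf f x z) x z by apply: connect1; rewrite /addleaf !eqxx orbT.
split; last first.
- move=> u v; rewrite /addleaf => /orP[/orP[/fK ->|/andP[/eqP-> /eqP->]]|/andP[/eqP-> /eqP->]];
    by rewrite ?eqxx ?orbT // csym eqxx.
- by rewrite cardsU1 zV.
split.
- split.
  + move=> u v; rewrite /addleaf => /orP[/orP[/fg //|/andP[/eqP-> /eqP->]]|/andP[/eqP-> /eqP->]] //.
  + move=> u v; rewrite /addleaf fsym -!orbA; congr (_ || _).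
    by rewrite orbC (andbC (u == x)) (andbC (u == z)).
- move=> u v; rewrite /addleaf !inE => /orP[/orP[/fin /andP[->->]|/andP[/eqP-> /eqP->]]|/andP[/eqP-> /eqP->]];
    by rewrite ?eqxx ?xV ?orbT.
- move=> u v; rewrite !inE => /orP[/eqP->|uV] /orP[/eqP->|vV].
  + exact: connect0.
  + apply: connect_trans czx _; exact: subc (fcon _ _ xV vV).
  + apply: connect_trans _ cxz; exact: subc (fcon _ _ uV xV).
  + exact: subc (fcon _ _ uV vV).
- have -> : [set e : T * T | addleaf f x z e.1 e.2] =
            (x, z) |: ((z, x) |: [set e : T * T | f e.1 e.2]).
    apply/setP=> -[u v]; rewrite !inE /addleaf /= !xpair_eqE.
    by rewrite -!orbA orbC -!orbA; congr (_ || _); rewrite orbC.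
  rewrite !cardsU1 fcard !inE /= fz fz' !xpair_eqE (negbTE xz) /= zV.
  lia.
- move=> x1 y1 u v; rewrite /addleaf.
  move=> /orP[/orP[f1|/andP[/eqP-> /eqP->]]|/andP[/eqP-> /eqP->]]
         /orP[/orP[f2|/andP[/eqP-> /eqP->]]|/andP[/eqP-> /eqP->]] //;
  try (by move=> e; apply: finj);
  try (by left); try (by right).
  + move=> e; move: (fK _ _ f1); rewrite e => /negP; by rewrite (negbTE Kn).
  + move=> e; move: (fK _ _ f1); rewrite e csym => /negP; by rewrite (negbTE Kn).
  + move=> e; move: (fK _ _ f2); rewrite -e => /negP; by rewrite (negbTE Kn).
  + move=> e; move: (fK _ _ f2); rewrite -e csym => /negP; by rewrite (negbTE Kn).
Qed.

Definition fmap (T T' : finType) (m : T -> T') (f : rel T) : rel T' :=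
  fun u v => [exists x, exists y, (u == m x) && (v == m y) && f x y].

Lemma fmapP (T T' : finType) (m : T -> T') (f : rel T) u v :
  reflect (exists x y, [/\ u = m x, v = m y & f x y]) (fmap m f u v).
Proof.
apply: (iffP existsP) => [[x /existsP[y /andP[/andP[/eqP-> /eqP->] fxy]]]|[x [y [-> -> fxy]]]].
  by exists x, y.
by exists x; apply/existsP; exists y; rewrite !eqxx fxy.
Qed.

Lemma fmap_img (T T' : finType) (m : T -> T') (f : rel T) x y :
  f x y -> fmap m f (m x) (m y).
Proof. by move=> fxy; apply/fmapP; exists x, y. Qed.

Lemma tmap (T T' : finType) (g : rel T) (g' : rel T') c c' (m : T -> T') V f K :
  injective m -> (forall x y, g x y -> g' (m x) (m y)) ->
  (forall x y, g x y -> c' (m x) (m y) = c x y) ->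
  tinv g c V f K -> tinv g' c' (m @: V) (fmap m f) K.
Proof.
move=> minj gg cc [[[fg fsym] fin fcon fcard finj] V0 fK].
split; [|by rewrite card_imset|by move=> u v /fmapP[x [y [-> -> fxy]]]; rewrite cc ?fK ?fg].
split.
- split.
  + by move=> u v /fmapP[x [y [-> -> fxy]]]; apply/gg/fg.
  + move=> u v; apply/fmapP/fmapP => -[x [y [-> -> fxy]]]; exists y, x; by rewrite fsym.
- move=> u v /fmapP[x [y [-> -> fxy]]]; move/andP: (fin _ _ fxy) => [xV yV].
  by rewrite !imset_f.
- move=> u v /imsetP[x xV ->] /imsetP[y yV ->].
  move/connectP: (fcon _ _ xV yV) => [p pp ->].
  apply/connectP; exists (map m p); last by rewrite last_map.
  by apply: homo_path pp => a b; apply: fmap_img.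
- have -> : [set e : T' * T' | fmap m f e.1 e.2] =
            (fun e : T * T => (m e.1, m e.2)) @: [set e : T * T | f e.1 e.2].
    apply/setP=> -[u v]; rewrite !inE /=; apply/fmapP/imsetP.
      by move=> [x [y [-> -> fxy]]]; exists (x, y); rewrite ?inE.
    by move=> [[x y]]; rewrite inE /= => fxy [-> ->]; exists x, y.
  rewrite card_imset ?fcard ?card_imset // => -[a b] [a' b'] /= [/minj-> /minj->] //.
- move=> u v u' v' /fmapP[x [y [-> -> fxy]]] /fmapP[x' [y' [-> -> fxy']]].
  rewrite !cc ?fg // => /(finj _ _ _ _ fxy fxy') [[-> ->]|[-> ->]]; by [left|right].
Qed.

Lemma pairmap_mem (T : eqType) (c : T -> T -> nat) y p n :
  n \in pairmap c y p -> exists u v, [/\ u \in y :: p, v \in y :: p & n = c u v].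
Proof.
elim: p y => [|z p IH] y //=; rewrite inE => /orP[/eqP->|].
  by exists y, z; rewrite !inE !eqxx ?orbT.
move=> /IH [u [v [uin vin ->]]]; exists u, v; split=> //; exact: mem_behead.
Qed.

Lemma set2_inj (T : finType) (x y u v : T) : [set x; y] = [set u; v] ->
  (x = u /\ y = v) \/ (x = v /\ y = u).
Proof.
move=> e.
have hx : x \in [set u; v] by rewrite -e !inE eqxx.
have hy : y \in [set u; v] by rewrite -e !inE eqxx orbT.
have hu : u \in [set x; y] by rewrite e !inE eqxx.
have hv : v \in [set x; y] by rewrite e !inE eqxx orbT.
move: hx hy hu hv; rewrite !inE.
by do 4 (case/orP=> /eqP ?); subst; auto.
Qed.

Definition cinj (T : finType) (x y : T) : nat := enum_rank [set x; y].
Arguments cinj {T}.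

Lemma cinj_sym (T : finType) (x y : T) : cinj x y = cinj y x.
Proof. by rewrite /cinj setUC. Qed.

Lemma cinj_eq (T : finType) (x y u v : T) : cinj x y = cinj u v ->
  (x = u /\ y = v) \/ (x = v /\ y = u).
Proof. by move=> /val_inj /enum_rank_inj; apply: set2_inj. Qed.

Lemma cinj_lt (T : finType) (x y : T) : cinj x y < #|{set T}|.
Proof. by rewrite /cinj ltn_ord. Qed.

Lemma uniq_pairmap_cinj (T : finType) (x : T) p : uniq (x :: p) -> uniq (pairmap cinj x p).
Proof.
elim: p x => [|y p IH] x //= /andP[xn /andP[yn up]].
rewrite IH ?andbT /=; last by rewrite yn.
apply/negP=> /pairmap_mem [u [v [uin vin /cinj_eq [[e1 e2]|[e1 e2]]]]]; subst;
  by rewrite ?uin ?vin in xn.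
Qed.

Definition Kof (T : finType) (V : {set T}) (n : nat) : bool :=
  [exists u in V, exists v in V, n == cinj u v].

Lemma Kof_sub (T : finType) (V V' : {set T}) n : V \subset V' -> Kof V n -> Kof V' n.
Proof.
move=> sVV /existsP[u /andP[uV /existsP[v /andP[vV e]]]].
apply/existsP; exists u; rewrite (subsetP sVV) //=; apply/existsP; exists v.
by rewrite (subsetP sVV).
Qed.

Lemma attach (T : finType) (g : rel T) (V : {set T}) (f : rel T) (z : T) (p : seq T) : symmetric g ->
  path g z p -> last z p \in V -> tinv g cinj V f (Kof V) ->
  exists (V' : {set T}) (f' : rel T), [/\ z \in V', V \subset V' & tinv g cinj V' f' (Kof V')].
Proof.
move=> gs; elim: p z V f => [|w p IH] z V f /=.
  by move=> _ zV tv; exists V, f; split.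
move=> /andP[gzw pp] lV tv; have [V' [f' [wV sVV tv']]] := IH _ _ _ pp lV tv.
case zV': (z \in V'); first by exists V', f'.
exists (z |: V'), (addleaf f' w z); split.
- by rewrite setU11.
- by apply: subset_trans sVV _; apply: subsetUr.
have zn : z \notin V' by rewrite zV'.
have gwz : g w z by rewrite gs.
have Kn : ~~ Kof V' (cinj w z).
  apply/negP=> /existsP[u /andP[uV /existsP[v /andP[vV /eqP /cinj_eq [[e1 e2]|[e1 e2]]]]]];
    subst; by rewrite ?uV ?vV in zV'.
apply: (tinv_weak _ (leaf (@cinj_sym T) tv' wV zn gwz gzw Kn)).
move=> n /orP[/eqP->|]; last by apply: Kof_sub; apply: subsetUr.
apply/existsP; exists w; apply/andP; split; first by apply/setU1P; right.
apply/existsP; exists z; apply/andP; split; first by apply/setU1P; left.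
done.
Qed.

Lemma tree_cover (T : finType) (g : rel T) (S : {set T}) x : symmetric g ->
  (forall u v, connect g u v) ->
  exists (V : {set T}) (f : rel T), [/\ x \in V, S \subset V & tinv g cinj V f (Kof V)].
Proof.
move=> gs gc.
suff: forall s : seq T, exists (V : {set T}) (f : rel T), [/\ x \in V, {subset s <= V} & tinv g cinj V f (Kof V)].
  move=> /(_ (enum S)) [V [f [xV sV tv]]]; exists V, f; split=> //.
  by apply/subsetP=> y yS; apply: sV; rewrite mem_enum.
elim=> [|y s [V [f [xV sV tv]]]].
  by exists [set x], (fun _ _ => false); split; rewrite ?inE ?eqxx //; apply: tinv1.
move/connectP: (gc y x) => [p pp lp].
have lV : last y p \in V by rewrite -lp.
have [V' [f' [yV sVV tv']]] := attach gs pp lV tv.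
exists V', f'; split=> //; first by rewrite (subsetP sVV).
by move=> u; rewrite inE => /orP[/eqP->//|/sV /(subsetP sVV)].
Qed.

Lemma rx3_exists (T : finType) (g : rel T) : simple_graph g -> connected g ->
  exists k, rx3_ok g k.
Proof.
move=> [_ gs] gc; exists #|{set T}|, cinj; split.
  by split=> [x y|x y _]; [apply: cinj_sym|apply: cinj_lt].
move=> S S3; have [x xS] : exists x, x \in S.
  by apply/set0Pn; rewrite -card_gt0 S3.
have [V [f [_ sV [tv _ _]]]] := tree_cover S x gs gc.
by exists V, f.
Qed.

Lemma rc_exists (T : finType) (g : rel T) : simple_graph g -> connected g ->
  exists k, rc_ok g k.
Proof.
move=> [_ gs] gc; exists #|{set T}|, cinj; split.
  by split=> [x y|x y _]; [apply: cinj_sym|apply: cinj_lt].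
move=> x y _; move/connectP: (gc x y) => [p pp ->].
case: (shortenP pp) => p' pp' up' _.
by exists p'; split=> //; apply: uniq_pairmap_cinj.
Qed.

Lemma path_tree (T : finType) (g : rel T) c x p : symmetric g ->
  (forall u v, c u v = c v u) ->
  path g x p -> uniq (x :: p) -> uniq (pairmap c x p) ->
  exists f : rel T, tinv g c [set v in x :: p] f (fun n => n \in pairmap c x p).
Proof.
move=> gs cs; elim: p x => [|y p IH] x /=.
  move=> _ _ _; exists (fun _ _ => false).
  have -> : [set v in [:: x]] = [set x] by apply/setP=> v; rewrite !inE.
  exact: tinv1.
move=> /andP[gxy pp] /andP[xn uyp] /andP[cn up].
have [f tv] := IH _ pp uyp up.
exists (addleaf f y x).
have -> : [set v in [:: x, y & p]] = x |: [set v in y :: p].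
  by apply/setP=> v; rewrite !inE.
apply: (tinv_weak _ (leaf cs tv _ _ _ gxy _)).
- by move=> n; rewrite !inE cs.
- by rewrite !inE eqxx.
- by rewrite inE.
- by rewrite gs.
- by rewrite cs.
Qed.

Lemma cards3d (T : finType) (a b c : T) : a != b -> a != c -> b != c -> #|[set a; b; c]| = 3.
Proof.
move=> ab ac bc; rewrite -setUA cardsU1 cards2 !inE bc (negbTE ab) (negbTE ac) //.
Qed.

Lemma triple_ex (T : finType) (S : {set T}) : #|S| = 3 ->
  exists a b c, [/\ a != b, a != c, b != c & S = [set a; b; c]].
Proof.
move=> S3; have := enum_uniq (mem S); have : size (enum S) = 3 by rewrite -cardE.
case E: (enum S) => [|a [|b [|c [|d s]]]] //= _.
rewrite !inE !negb_or => /andP[/andP[ab ac] /andP[bc _]].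
exists a, b, c; split=> //.
by apply/setP=> x; rewrite -mem_enum E !inE orbA.
Qed.

Lemma third (T : finType) (y z : T) : 3 <= #|T| -> exists w, (w != y) && (w != z).
Proof.
move=> T3; have : 0 < #|[set: T] :\ y :\ z|.
  move: (cardsD1 z ([set: T] :\ y)) (cardsD1 y [set: T]); rewrite cardsT; lia.
by rewrite card_gt0 => /set0Pn [w]; rewrite !inE andbT => /andP[wz wy]; exists w; rewrite wz wy.
Qed.

Lemma card1_eq (T : finType) (x y : T) : #|T| = 1 -> x = y.
Proof.
move=> T1; have := max_card [set x; y]; rewrite cards2 T1.
by case: eqP.
Qed.

Lemma card2_eq (T : finType) (a b x : T) : #|T| = 2 -> a != b -> (x = a) \/ (x = b).
Proof.
move=> T2 ab; case: (x =P a) => [|xa]; first by left.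
case: (x =P b) => [|xb]; first by right.
have : #|[set a; b; x]| <= #|T| by apply: max_card.
rewrite cards3d // ?T2 //; apply/eqP => e; by [apply: xa|apply: xb].
Qed.

Lemma rt_tinv (T : finType) (g : rel T) c k V f : coloring g c k -> rainbow_tree g c V f ->
  0 < #|V| -> tinv g c V f (fun n => n < k).
Proof. move=> [_ ck] rt V0; split=> // x y fxy; case: rt => [[fg _] _ _ _ _]; exact/ck/fg. Qed.

Definition good (T : finType) (g : rel T) (c : T -> T -> nat) k :=
  coloring g c k /\ forall S : {set T}, #|S| = 3 ->
      exists (V : {set T}) (f : rel T), S \subset V /\ rainbow_tree g c V f.

Lemma good_tri (T : finType) (g : rel T) c k a b d : good g c k -> a != b -> a != d -> b != d ->
  exists (V : {set T}) (f : rel T), [/\ a \in V, b \in V, d \in V & tinv g c V f (fun n => n < k)].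
Proof.
move=> [col tri] ab ad bd; have [V [f [sV rt]]] := tri _ (cards3d ab ad bd).
have aV : a \in V by rewrite (subsetP sV) // !inE eqxx.
exists V, f; split; rewrite ?(subsetP sV) ?inE ?eqxx ?orbT //.
by apply: rt_tinv => //; apply/card_gt0P; exists a.
Qed.

Definition Q (T : finType) (g : rel T) c (a b d : T) :=
  exists (V : {set T}) (f : rel T) (K : nat -> bool), [/\ a \in V, b \in V, d \in V & tinv g c V f K].

Lemma Q12 (T : finType) (g : rel T) c a b d : Q g c a b d -> Q g c b a d.
Proof. by move=> [V [f [K [? ? ? ?]]]]; exists V, f, K. Qed.
Lemma Q23 (T : finType) (g : rel T) c a b d : Q g c a b d -> Q g c a d b.
Proof. by move=> [V [f [K [? ? ? ?]]]]; exists V, f, K. Qed.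

Lemma Q_good (T : finType) (g : rel T) c k : coloring g c k ->
  (forall a b d, a != b -> a != d -> b != d -> Q g c a b d) -> good g c k.
Proof.
move=> col hQ; split=> // S /triple_ex [a [b [d [ab ad bd ->]]]].
have [V [f [K [aV bV dV [rt _ _]]]]] := hQ _ _ _ ab ad bd.
exists V, f; split=> //; apply/subsetP=> x; rewrite !inE -orbA.
by case/or3P=> /eqP->.
Qed.

Lemma good_le (T : finType) (g : rel T) c k k' : k <= k' -> good g c k -> good g c k'.
Proof. move=> kk [[cs ck] t]; split=> //; split=> // x y /ck; lia. Qed.

Definition jc (T1 T2 : finType) (cg : T1 -> T1 -> nat) (ch : T2 -> T2 -> nat) (k : nat)
  (u v : T1 + T2) : nat :=
  match u, v with
  | inl x, inl y => cg x y
  | inr x, inr y => ch x y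
  | _, _ => k
  end.

Lemma join_simple (T1 T2 : finType) (g : rel T1) (h : rel T2) :
  simple_graph g -> simple_graph h -> simple_graph (join g h).
Proof.
move=> [gi gs] [hi hs]; split.
  by case=> x /=; [apply: gi|apply: hi].
by case=> x; case=> y /=.
Qed.

Lemma inl_inj (A B : Type) : injective (@inl A B). Proof. by move=> x y []. Qed.
Lemma inr_inj (A B : Type) : injective (@inr A B). Proof. by move=> x y []. Qed.

Section JoinGood.
Variables (T1 T2 : finType) (g : rel T1) (h : rel T2) (cg : T1 -> T1 -> nat) (ch : T2 -> T2 -> nat).
Variables (kg kh k : nat).
Hypotheses (sg : simple_graph g) (sh : simple_graph h) (kgk : kg <= k) (khk : kh <= k).
Hypotheses (colg : coloring g cg kg) (colh : coloring h ch kh).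
Hypothesis TG : forall a b d : T1, a != b -> a != d -> b != d ->
  exists (V : {set T1}) (f : rel T1), [/\ a \in V, b \in V, d \in V & tinv g cg V f (fun n => n < kg)].
Hypothesis TH : forall a b d : T2, a != b -> a != d -> b != d ->
  exists (V : {set T2}) (f : rel T2), [/\ a \in V, b \in V, d \in V & tinv h ch V f (fun n => n < kh)].
Hypothesis EG : forall a b : T1, a != b ->
  exists (V : {set T1}) (f : rel T1), [/\ a \in V, b \in V & tinv g cg V f (fun n => n < kg)].
Hypothesis EH : forall a b : T2, a != b ->
  exists (V : {set T2}) (f : rel T2), [/\ a \in V, b \in V & tinv h ch V f (fun n => n < kh)].

Let J := join g h.
Let c := jc cg ch k.

Lemma c_sym : forall u v, c u v = c v u.
Proof. case: colg colh => [cgs _] [chs _]; by case=> x; case=> y //=. Qed.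

Lemma mapL V f : tinv g cg V f (fun n => n < kg) -> tinv J c (inl @: V) (fmap inl f) (fun n => n < k).
Proof.
move=> tv; apply: (tinv_weak _ (tmap (@inl_inj _ _) _ _ tv)) => //.
by move=> n; lia.
Qed.

Lemma mapR V f : tinv h ch V f (fun n => n < kh) -> tinv J c (inr @: V) (fmap inr f) (fun n => n < k).
Proof.
move=> tv; apply: (tinv_weak _ (tmap (@inr_inj _ _) _ _ tv)) => //.
by move=> n; lia.
Qed.

Lemma cLLL x y z : x != y -> x != z -> y != z -> Q J c (inl x) (inl y) (inl z).
Proof.
move=> xy xz yz; have [V [f [xV yV zV tv]]] := TG xy xz yz.
by exists (inl @: V), (fmap inl f), (fun n => n < k); split; rewrite ?imset_f //; apply: mapL.
Qed.

Lemma cRRR x y z : x != y -> x != z -> y != z -> Q J c (inr x) (inr y) (inr z).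
Proof.
move=> xy xz yz; have [V [f [xV yV zV tv]]] := TH xy xz yz.
by exists (inr @: V), (fmap inr f), (fun n => n < k); split; rewrite ?imset_f //; apply: mapR.
Qed.

Lemma cLLR x y z : x != y -> Q J c (inl x) (inl y) (inr z).
Proof.
move=> xy; have [V [f [xV yV tv]]] := EG xy.
have tv' := mapL tv.
have zn : (inr z : T1 + T2) \notin inl @: V by apply/imsetP => -[].
have := leaf c_sym tv' (imset_f _ xV) zn (erefl true) (erefl true).
move=> /(_ (negbT (ltnn k))) tv2.
by exists (inr z |: inl @: V), (addleaf (fmap inl f) (inl x) (inr z)), (fun n => (n == c (inl x) (inr z)) || (n < k));
  split; rewrite ?inE ?imset_f ?orbT ?eqxx.
Qed.

Lemma cLRR x y z : y != z -> Q J c (inl x) (inr y) (inr z).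
Proof.
move=> yz; have [V [f [yV zV tv]]] := EH yz.
have tv' := mapR tv.
have xn : (inl x : T1 + T2) \notin inr @: V by apply/imsetP => -[].
have := leaf c_sym tv' (imset_f _ yV) xn (erefl true) (erefl true).
move=> /(_ (negbT (ltnn k))) tv2.
by exists (inl x |: inr @: V), (addleaf (fmap inr f) (inr y) (inl x)), (fun n => (n == c (inr y) (inl x)) || (n < k));
  split; rewrite ?inE ?imset_f ?orbT ?eqxx.
Qed.

Lemma join_good : good J c k.+1.
Proof.
apply: Q_good.
  split; first exact: c_sym.
  case: colg colh => [_ cgk] [_ chk].
  case=> x; case=> y //= e; [move: (cgk _ _ e)|move: (chk _ _ e)]; lia.
case=> a; case=> b; case=> d /= ab ad bd.
- exact: cLLL.
- exact: cLLR.
- exact: Q23 (cLLR _ ad).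
- exact: cLRR.
- exact: Q12 (Q23 (cLLR _ bd)).
- exact: Q12 (cLRR _ ad).
- exact: Q23 (Q12 (cLRR _ ab)).
- exact: cRRR.
Qed.

End JoinGood.

Lemma part1 (T1 T2 : finType) (g : rel T1) (h : rel T2) kh :
  simple_graph g -> simple_graph h -> #|T1| = 1 -> 3 <= #|T2| ->
  rx3_ok h kh -> rx3_ok (join g h) kh.+1.
Proof.
move=> sg sh T1e T2e [ch goodh].
have colg : coloring g (fun _ _ => 0) 0.
  split=> // x y; rewrite (card1_eq x y T1e); case: sg => gi _; by rewrite gi.
have ne : forall x y : T1, x != y -> False by move=> x y; rewrite (card1_eq x y T1e) eqxx.
exists (jc (fun _ _ => 0) ch kh).
apply: (join_good (leq0n kh) (leqnn kh) colg goodh.1).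
- by move=> a b d /ne.
- by move=> a b d ab ad bd; apply: good_tri.
- by move=> a b /ne.
- move=> a b ab; have [w /andP[wa wb]] := third a b T2e.
  rewrite eq_sym in wa; rewrite eq_sym in wb.
  have [V [f [aV bV wV tv]]] := good_tri goodh ab wa wb.
  by exists V, f.
Qed.

Lemma ext2 (T : finType) (g : rel T) c k : 3 <= #|T| -> good g c k ->
  forall a b : T, a != b ->
  exists (V : {set T}) (f : rel T), [/\ a \in V, b \in V & tinv g c V f (fun n => n < k)].
Proof.
move=> T3 gd a b ab; have [w /andP[wa wb]] := third a b T3.
rewrite eq_sym in wa; rewrite eq_sym in wb.
have [V [f [aV bV wV tv]]] := good_tri gd ab wa wb.
by exists V, f.
Qed.

Lemma part3 (T1 T2 : finType) (g : rel T1) (h : rel T2) kg kh :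
  3 <= #|T1| -> 3 <= #|T2| ->
  rx3_ok g kg -> rx3_ok h kh -> rx3_ok (join g h) (maxn kg kh).+1.
Proof.
move=> T1e T2e [cg goodg] [ch goodh].
exists (jc cg ch (maxn kg kh)).
apply: (join_good (leq_maxl kg kh) (leq_maxr kg kh) goodg.1 goodh.1).
- by move=> a b d ab ad bd; apply: good_tri.
- by move=> a b d ab ad bd; apply: good_tri.
- exact: ext2.
- exact: ext2.
Qed.

Lemma pm_edge (T : eqType) (g : rel T) (c : T -> T -> nat) x p n :
  path g x p -> n \in pairmap c x p -> exists u v, g u v /\ n = c u v.
Proof.
elim: p x => [|y p IH] x //= /andP[gxy pp]; rewrite inE => /orP[/eqP->|/IH]; last exact.
by exists x, y.
Qed.

Definition c2 (T1 T2 : finType) (a : T1) (ch : T2 -> T2 -> nat) (k : nat) (u v : T1 + T2) : nat :=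
  match u, v with
  | inl _, inl _ => k + 2
  | inl p, inr _ => if p == a then k else k + 1
  | inr _, inl p => if p == a then k else k + 1
  | inr x, inr y => ch x y
  end.

Lemma ar1 k : (k + 2 == k + 1) = false. Proof. lia. Qed.
Lemma ar2 k : (k + 2 < k) = false. Proof. lia. Qed.
Lemma ar3 k : (k + 1 < k) = false. Proof. lia. Qed.
Lemma ar4 k : (k == k + 2) = false. Proof. lia. Qed.
Lemma ar5 k : (k == k + 1) = false. Proof. lia. Qed.
Lemma ar6 k : (k + 1 == k) = false. Proof. lia. Qed.

Section Part2.
Variables (T1 T2 : finType) (g : rel T1) (h : rel T2) (ch : T2 -> T2 -> nat) (k : nat) (a b : T1).
Hypotheses (sg : simple_graph g) (sh : simple_graph h) (ab : a != b) (gba : g b a) (T1e : #|T1| = 2).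
Hypotheses (colh : coloring h ch k)
  (paths : forall x y : T2, x != y -> exists p, rainbow_path h ch x y p).

Let J := join g h.
Let c := c2 a ch k.

Lemma c2_sym : forall u v, c u v = c v u.
Proof. case: colh => [chs _]; by case=> x; case=> y //=. Qed.

Lemma PT x y : x != y -> exists (V : {set T2}) (f : rel T2),
  [/\ x \in V, y \in V & tinv h ch V f (fun n => n < k)].
Proof.
move=> /paths [p [pp lp up upm]].
have [f tv] := path_tree (sh.2) (colh.1) pp up upm.
exists [set v in x :: p], f; split.
- by rewrite inE mem_head.
- by rewrite inE -lp mem_last.
- apply: (tinv_weak _ tv) => n /(pm_edge pp) [u [v [huv ->]]]; exact: colh.2.
Qed.

Lemma mapR2 V f : tinv h ch V f (fun n => n < k) -> tinv J c (inr @: V) (fmap inr f) (fun n => n < k).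
Proof. by move=> tv; apply: (tmap (@inr_inj _ _) _ _ tv). Qed.

Lemma other p q : p != q -> (p == a) || (q == a).
Proof.
move=> pq; case: (card2_eq p T1e ab) => ep; first by rewrite ep eqxx.
case: (card2_eq q T1e ab) => eq; first by rewrite eq eqxx orbT.
by move: pq; rewrite ep eq eqxx.
Qed.

Lemma dLLR p q z : p != q -> Q J c (inl p) (inl q) (inr z).
Proof.
move=> pq.
have t0 := tinv1 J c (inr z : T1 + T2) (fun _ => false).
have n1 : (inl p : T1 + T2) \notin [set inr z] by rewrite inE.
have t1 := leaf c2_sym t0 (set11 _) n1 (erefl true) (erefl true) (erefl true).
have n2 : (inl q : T1 + T2) \notin inl p |: [set inr z].
  by rewrite !inE negb_or /= eq_sym pq.
have m2 : (inr z : T1 + T2) \in inl p |: [set inr z] by rewrite !inE eqxx orbT.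
have Kn : ~~ ((c (inr z) (inl q) == c (inr z) (inl p)) || false).
  rewrite orbF /c /c2; move: (other pq); case: (p =P a) => [ea|_]; case: (q =P a) => [eb|_] //=.
  + by move: pq; rewrite ea eb eqxx.
  + by rewrite ar6.
  + by rewrite ar5.
have t2 := leaf c2_sym t1 m2 n2 (erefl true) (erefl true) Kn.
do 3 eexists; split; last exact: t2.
- by rewrite !inE eqxx orbT.
- by rewrite !inE eqxx.
- by rewrite !inE eqxx !orbT.
Qed.
Lemma dLRR p x y : x != y -> Q J c (inl p) (inr x) (inr y).
Proof.
move=> xy; have [V [f [xV yV tv]]] := PT xy.
have tv' := mapR2 tv.
have pn : (inl p : T1 + T2) \notin inr @: V by apply/imsetP => -[].
have Kn : ~~ (c (inr x) (inl p) < k) by rewrite /c /c2 /=; case: (p == a); rewrite ?ltnn ?ar3.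
have t2 := leaf c2_sym tv' (imset_f _ xV) pn (erefl true) (erefl true) Kn.
do 3 eexists; split; last exact: t2.
- by rewrite !inE eqxx.
- by rewrite !inE imset_f ?orbT.
- by rewrite !inE imset_f ?orbT.
Qed.

Lemma dRRR x y z : x != y -> x != z -> y != z -> Q J c (inr x) (inr y) (inr z).
Proof.
move=> xy xz yz; have [V [f [xV yV tv]]] := PT xy.
have tv' := mapR2 tv.
case zV: (z \in V).
  by do 3 eexists; split; last exact: tv'; rewrite imset_f.
have ba : (b == a) = false by rewrite eq_sym (negbTE ab).
have bn : (inl b : T1 + T2) \notin inr @: V by apply/imsetP => -[].
have K1 : ~~ (c (inr x) (inl b) < k) by rewrite /c /c2 /= ba ar3.
have t1 := leaf c2_sym tv' (imset_f _ xV) bn (erefl true) (erefl true) K1.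
have an : (inl a : T1 + T2) \notin inl b |: inr @: V.
  rewrite !inE negb_or /= ab andTb; by apply/imsetP => -[].
have bm : (inl b : T1 + T2) \in inl b |: inr @: V by rewrite !inE eqxx.
have gab : g a b by rewrite sg.2.
have K2 : ~~ ((c (inl b) (inl a) == c (inr x) (inl b)) || (c (inl b) (inl a) < k)).
  by rewrite /c /c2 /= ba ar1 ar2.
have t2 := leaf c2_sym t1 bm an gba gab K2.
have zn : (inr z : T1 + T2) \notin inl a |: (inl b |: inr @: V).
  rewrite !inE !negb_or /=; apply/imsetP => -[w wV [e]]; by rewrite e wV in zV.
have am : (inl a : T1 + T2) \in inl a |: (inl b |: inr @: V) by rewrite !inE eqxx.
have K3 : ~~ [|| c (inl a) (inr z) == c (inl b) (inl a), c (inl a) (inr z) == c (inr x) (inl b)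
             | c (inl a) (inr z) < k].
  by rewrite /c /c2 /= eqxx ba ar4 ar5 ltnn.
have t3 := leaf c2_sym t2 am zn (erefl true) (erefl true) K3.
do 3 eexists; split; last exact: t3.
- by rewrite !inE imset_f ?orbT.
- by rewrite !inE imset_f ?orbT.
- by rewrite !inE eqxx.
Qed.

Lemma part2_good : good J c (k + 3).
Proof.
apply: Q_good.
  split; first exact: c2_sym.
  case: colh => [_ chk].
  case=> x; case=> y //= e; rewrite /c /c2 /=;
    [lia | by case: (_ == a); lia | by case: (_ == a); lia | move: (chk _ _ e); lia].
case=> p; case=> q; case=> r /= pq pr qr.
- by have := max_card [set p; q; r]; rewrite cards3d // T1e.
- exact: dLLR.
- exact: Q23 (dLLR _ pr).
- exact: dLRR.
- exact: Q12 (Q23 (dLLR _ qr)).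
- exact: Q12 (dLRR _ pr).
- exact: Q23 (Q12 (dLRR _ pq)).
- exact: dRRR.
Qed.
End Part2.

Lemma part2 (T1 T2 : finType) (g : rel T1) (h : rel T2) k :
  simple_graph g -> connected g -> simple_graph h -> #|T1| = 2 ->
  rc_ok h k -> rx3_ok (join g h) (k + 3).
Proof.
move=> sg cg sh T1e [ch [colh paths]].
have : #|[set: T1]| == 2 by rewrite cardsT T1e.
move/cards2P => [a [b [ab _]]].
have gba : g b a.
  move/connectP: (cg b a) => [[|w p]] /=; first by move=> _ e; move: ab; rewrite e eqxx.
  move=> /andP[gbw _] _; case: (card2_eq w T1e ab) => e; first by rewrite -e.
  by move: gbw; rewrite e sg.1.
exists (c2 a ch k); exact: (part2_good sg sh ab gba T1e colh paths).
Qed.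

Lemma good_pos (T : finType) (g : rel T) c k : 3 <= #|T| -> good g c k -> 0 < k.
Proof.
move=> T3 gd.
have /card_gt0P [x _] : 0 < #|T| by apply: leq_trans T3.
have [y /andP[yx _]] := third x x T3.
have [z /andP[zx zy]] := third x y T3.
rewrite eq_sym in yx; rewrite eq_sym in zx; rewrite eq_sym in zy.
have [V [f [xV yV zV [[_ _ _ fcard _] _ fK]]]] := good_tri gd yx zx zy.
have sub : [set x; y] \subset V by apply/subsetP=> u; rewrite !inE => /orP[] /eqP->.
have V2 : 1 < #|V| by have := subset_leq_card sub; rewrite cards2 yx.
have : 0 < #|[set e : T * T | f e.1 e.2]| by rewrite fcard; move: V2; clear; lia.
move/card_gt0P => [e]; rewrite inE => /fK /=.
by case: (k) => //; rewrite ltn0.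
Qed.

Lemma good_transfer (T T' : finType) (g : rel T) (g' : rel T') (phi : T -> T') (psi : T' -> T) c k :
  cancel phi psi -> cancel psi phi -> symmetric g ->
  (forall a b, g a b -> g' (phi a) (phi b)) -> 0 < k -> good g c k ->
  good g' (fun u v => if g (psi u) (psi v) then c (psi u) (psi v) else 0) k.
Proof.
move=> phiK psiK gs hom k0 [[cs ck] tri]; split.
  split=> [u v|u v _]; first by rewrite gs cs.
  by case: ifP => // /ck.
move=> S S3.
have S3' : #|psi @: S| = 3 by rewrite card_imset //; apply: can_inj psiK.
have [V [f [sV rt]]] := tri _ S3'.
have V0 : 0 < #|V| by apply: leq_trans (subset_leq_card sV); rewrite S3'.
have tv := rt_tinv (conj cs ck) rt V0.
pose c' := fun u v => if g (psi u) (psi v) then c (psi u) (psi v) else 0.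
have cc : forall a b, g a b -> c' (phi a) (phi b) = c a b.
  by move=> a b gab; rewrite /c' !phiK gab.
have [rt' _ _] := @tmap _ _ g g' c c' phi V f _ (can_inj phiK) hom cc tv.
exists (phi @: V), (fmap phi f); split=> //.
apply/subsetP=> u uS; rewrite -[u]psiK imset_f // (subsetP sV) // imset_f //.
Qed.

Lemma tree2 (T : finType) (g : rel T) c r z1 z2 x2 :
  (forall u v, c u v = c v u) -> symmetric g ->
  z1 != r -> z2 != r -> z2 != z1 -> x2 \in [set r; z1] ->
  g r z1 -> g x2 z2 -> c x2 z2 != c r z1 ->
  exists (V : {set T}) (f : rel T) (K : nat -> bool),
    [/\ r \in V, z1 \in V, z2 \in V & tinv g c V f K].
Proof.
move=> cs gs n1 n2 n21 x2in g1 g2 c21.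
have t0 := tinv1 g c r (fun _ => false).
have m1 : z1 \notin [set r] by rewrite inE.
have g1' : g z1 r by rewrite gs.
have t1 := leaf cs t0 (set11 r) m1 g1 g1' (isT : ~~ false).
have m2 : z2 \notin z1 |: [set r] by rewrite !inE negb_or n21 n2.
have x2m : x2 \in z1 |: [set r] by move: x2in; rewrite !inE orbC.
have k2 : ~~ ((c x2 z2 == c r z1) || false) by rewrite orbF.
have g2' : g z2 x2 by rewrite gs.
have t2 := leaf cs t1 x2m m2 g2 g2' k2.
do 3 eexists; split; last exact: t2; by rewrite !inE eqxx ?orbT.
Qed.

Lemma tree3 (T : finType) (g : rel T) c r z1 z2 z3 x2 x3 :
  (forall u v, c u v = c v u) -> symmetric g ->
  z1 != r -> z2 != r -> z2 != z1 -> z3 != r -> z3 != z1 -> z3 != z2 ->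
  x2 \in [set r; z1] -> x3 \in [set r; z1; z2] ->
  g r z1 -> g x2 z2 -> g x3 z3 ->
  c x2 z2 != c r z1 -> c x3 z3 != c r z1 -> c x3 z3 != c x2 z2 ->
  exists (V : {set T}) (f : rel T) (K : nat -> bool),
    [/\ r \in V, z1 \in V, z2 \in V & z3 \in V /\ tinv g c V f K].
Proof.
move=> cs gs n1 n2 n21 n3 n31 n32 x2in x3in g1 g2 g3 c21 c31 c32.
have t0 := tinv1 g c r (fun _ => false).
have m1 : z1 \notin [set r] by rewrite inE.
have g1' : g z1 r by rewrite gs.
have t1 := leaf cs t0 (set11 r) m1 g1 g1' (isT : ~~ false).
have m2 : z2 \notin z1 |: [set r] by rewrite !inE negb_or n21 n2.
have x2m : x2 \in z1 |: [set r] by move: x2in; rewrite !inE orbC.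
have k2 : ~~ ((c x2 z2 == c r z1) || false) by rewrite orbF.
have g2' : g z2 x2 by rewrite gs.
have t2 := leaf cs t1 x2m m2 g2 g2' k2.
have m3 : z3 \notin z2 |: (z1 |: [set r]) by rewrite !inE !negb_or n32 n31 n3.
have x3m : x3 \in z2 |: (z1 |: [set r]).
  by move: x3in; rewrite !inE; case: (x3 == r); case: (x3 == z1); case: (x3 == z2).
have k3 : ~~ ((c x3 z3 == c x2 z2) || ((c x3 z3 == c r z1) || false)).
  by rewrite orbF negb_or c32 c31.
have g3' : g z3 x3 by rewrite gs.
have t3 := leaf cs t2 x3m m3 g3 g3' k3.
do 3 eexists; split; last (split; last exact: t3); by rewrite !inE eqxx ?orbT.
Qed.

Definition cmp (i j : nat) : nat := if i < j then 0 else if i == j then 1 else 2.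

Lemma cmp_lt i j : i < j -> cmp i j = 0. Proof. by rewrite /cmp => ->. Qed.
Lemma cmp_eq i : cmp i i = 1. Proof. by rewrite /cmp ltnn eqxx. Qed.
Lemma cmp_gt i j : j < i -> cmp i j = 2.
Proof. by move=> h; rewrite /cmp ltnNge ltnW //= gtn_eqF. Qed.

Lemma cmp_midA i1 i2 j : i1 < i2 -> i1 <= j -> j <= i2 -> cmp i1 j != cmp i2 j.
Proof.
move=> a b c; rewrite /cmp.
case: (ltngtP i1 j) => h1; case: (ltngtP i2 j) => h2 //; lia.
Qed.

Lemma cmp_midB i j1 j2 : j1 < j2 -> j1 <= i -> i <= j2 -> cmp i j1 != cmp i j2.
Proof.
move=> a b c; rewrite /cmp.
case: (ltngtP i j1) => h1; case: (ltngtP i j2) => h2 //; lia.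
Qed.

Definition ck (s : nat) (u v : 'I_s + 'I_s) : nat :=
  match u, v with
  | inl i, inr j => cmp i j
  | inr j, inl i => cmp i j
  | _, _ => 0
  end.

Lemma ck_sym s : forall u v : 'I_s + 'I_s, ck u v = ck v u.
Proof. by case=> x; case=> y. Qed.

Lemma Kbip_sym s t : symmetric (Kbip s t).
Proof. by case=> x; case=> y. Qed.

Lemma Kbip_simple s t : simple_graph (Kbip s t).
Proof. split; last exact: Kbip_sym. by case. Qed.

Lemma olt_ne s (i j : 'I_s) : i < j -> i != j.
Proof. by move=> h; apply/eqP => e; rewrite e ltnn in h. Qed.

Lemma sort2 (T : Type) (val : T -> nat) (P : T -> T -> Prop) :
  (forall a b, P a b -> P b a) -> (forall a b, val a < val b -> P a b) ->
  forall a b, val a != val b -> P a b.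
Proof.
move=> s12 H a b; case: (ltngtP (val a) (val b)) => h // _; [exact: H | apply: (s12); exact: H].
Qed.

Lemma sort3 (T : Type) (val : T -> nat) (P : T -> T -> T -> Prop) :
  (forall a b c, P a b c -> P b a c) -> (forall a b c, P a b c -> P a c b) ->
  (forall a b c, val a < val b -> val b < val c -> P a b c) ->
  forall a b c, val a != val b -> val a != val c -> val b != val c -> P a b c.
Proof.
move=> s12 s23 H a b c nab nac nbc.
case: (ltngtP (val a) (val b)) => hab; case: (ltngtP (val a) (val c)) => hac;
  case: (ltngtP (val b) (val c)) => hbc;
  first [ by move: nab; rewrite hab eqxx | by move: nac; rewrite hac eqxx
        | by move: nbc; rewrite hbc eqxx
        | by apply: (H) | by apply: (s23); apply: (H) | by apply: (s12); apply: H
        | by apply: (s12); apply: (s23); apply: (H) | by apply: (s23); apply: (s12); apply: H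
        | by apply: (s12); apply: (s23); apply: (s12); apply: (H) | lia ].
Qed.

Section KbipS.
Variable s : nat.
Let KB := Kbip s s.
Let C := @ck s.

Ltac side := try exact: (@ck_sym s); try exact: (@Kbip_sym s s).

Lemma QA (i1 i2 i3 : 'I_s) : i1 < i2 -> i2 < i3 -> Q KB C (inl i1) (inl i2) (inl i3).
Proof.
move=> h12 h23; have h13 := ltn_trans h12 h23.
have n12 := olt_ne h12; have n23 := olt_ne h23; have n13 := olt_ne h13.
have n12' := n12; have n23' := n23; have n13' := n13.
rewrite eq_sym in n12; rewrite eq_sym in n23; rewrite eq_sym in n13.
have [V [f [K [_ m1 m2 [m3 tv]]]]] : exists (V : {set 'I_s + 'I_s}) (f : rel ('I_s + 'I_s)) (K : nat -> bool),
  [/\ inr i2 \in V, inl i1 \in V, inl i2 \in V & inl i3 \in V /\ tinv KB C V f K].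
  apply: (@tree3 _ _ _ _ _ _ _ (inr i2) (inr i2)); side;
  rewrite ?inE /= ?(inj_eq (@inl_inj _ _)) ?(inj_eq (@inr_inj _ _)) ?eqxx ?orbT ?orTb ?n12 ?n23 ?n13 ?n12' ?n23' ?n13' ?cmp_eq ?(cmp_lt h12) ?(cmp_gt h23) //.
by exists V, f, K.
Qed.

Lemma QB (j1 j2 j3 : 'I_s) : j1 < j2 -> j2 < j3 -> Q KB C (inr j1) (inr j2) (inr j3).
Proof.
move=> h12 h23; have h13 := ltn_trans h12 h23.
have n12 := olt_ne h12; have n23 := olt_ne h23; have n13 := olt_ne h13.
have n12' := n12; have n23' := n23; have n13' := n13.
rewrite eq_sym in n12; rewrite eq_sym in n23; rewrite eq_sym in n13.
have [V [f [K [_ m1 m2 [m3 tv]]]]] : exists (V : {set 'I_s + 'I_s}) (f : rel ('I_s + 'I_s)) (K : nat -> bool),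
  [/\ inl j2 \in V, inr j1 \in V, inr j2 \in V & inr j3 \in V /\ tinv KB C V f K].
  apply: (@tree3 _ _ _ _ _ _ _ (inl j2) (inl j2)); side;
  rewrite ?inE /= ?(inj_eq (@inl_inj _ _)) ?(inj_eq (@inr_inj _ _)) ?eqxx ?orbT ?orTb ?n12 ?n23 ?n13 ?n12' ?n23' ?n13' ?cmp_eq ?(cmp_gt h12) ?(cmp_lt h23) //.
by exists V, f, K.
Qed.

Lemma QC (i1 i2 j : 'I_s) : i1 < i2 -> Q KB C (inl i1) (inl i2) (inr j).
Proof.
move=> h12; have n12 := olt_ne h12; have n12' := n12; rewrite eq_sym in n12.
case: (ltnP j i1) => hj1.
  have hj2 := ltn_trans hj1 h12; have nj := olt_ne hj2.
  have [V [f [K [_ m1 m2 [m3 tv]]]]] : exists (V : {set 'I_s + 'I_s}) (f : rel ('I_s + 'I_s)) (K : nat -> bool),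
    [/\ inr i2 \in V, inl i2 \in V, inl i1 \in V & inr j \in V /\ tinv KB C V f K].
    apply: (@tree3 _ _ _ _ _ _ _ (inr i2) (inl i1)); side;
    rewrite ?inE /= ?(inj_eq (@inl_inj _ _)) ?(inj_eq (@inr_inj _ _)) ?eqxx ?orbT ?orTb ?n12 ?n12' ?nj ?cmp_eq ?(cmp_lt h12) ?(cmp_gt hj1) //.
  by exists V, f, K.
case: (ltnP i2 j) => hj2.
  have h1j := ltn_trans h12 hj2; have nj := olt_ne h1j; rewrite eq_sym in nj.
  have [V [f [K [_ m1 m2 [m3 tv]]]]] : exists (V : {set 'I_s + 'I_s}) (f : rel ('I_s + 'I_s)) (K : nat -> bool),
    [/\ inr i1 \in V, inl i1 \in V, inl i2 \in V & inr j \in V /\ tinv KB C V f K].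
    apply: (@tree3 _ _ _ _ _ _ _ (inr i1) (inl i1)); side;
    rewrite ?inE /= ?(inj_eq (@inl_inj _ _)) ?(inj_eq (@inr_inj _ _)) ?eqxx ?orbT ?orTb ?n12 ?n12' ?nj ?cmp_eq ?(cmp_gt h12) ?(cmp_lt h1j) //.
  by exists V, f, K.
have cm := cmp_midA h12 hj1 hj2; rewrite eq_sym in cm.
have [V [f [K [m0 m1 m2 tv]]]] : exists (V : {set 'I_s + 'I_s}) (f : rel ('I_s + 'I_s)) (K : nat -> bool),
  [/\ inr j \in V, inl i1 \in V, inl i2 \in V & tinv KB C V f K].
  apply: (@tree2 _ _ _ _ _ _ (inr j)); side; rewrite ?inE /= ?(inj_eq (@inl_inj _ _)) ?(inj_eq (@inr_inj _ _)) ?eqxx ?orbT ?orTb ?n12 ?n12' //; exact: cm.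
by exists V, f, K.
Qed.

Lemma QD (i j1 j2 : 'I_s) : j1 < j2 -> Q KB C (inl i) (inr j1) (inr j2).
Proof.
move=> h12; have n12 := olt_ne h12; have n12' := n12; rewrite eq_sym in n12.
case: (ltnP i j1) => hi1.
  have hi2 := ltn_trans hi1 h12; have ni := olt_ne hi2.
  have [V [f [K [_ m1 m2 [m3 tv]]]]] : exists (V : {set 'I_s + 'I_s}) (f : rel ('I_s + 'I_s)) (K : nat -> bool),
    [/\ inl j2 \in V, inr j2 \in V, inr j1 \in V & inl i \in V /\ tinv KB C V f K].
    apply: (@tree3 _ _ _ _ _ _ _ (inl j2) (inr j1)); side;
    rewrite ?inE /= ?(inj_eq (@inl_inj _ _)) ?(inj_eq (@inr_inj _ _)) ?eqxx ?orbT ?orTb ?n12 ?n12' ?ni ?cmp_eq ?(cmp_gt h12) ?(cmp_lt hi1) //.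
  by exists V, f, K.
case: (ltnP j2 i) => hi2.
  have h1i := ltn_trans h12 hi2; have ni := olt_ne h1i; rewrite eq_sym in ni.
  have [V [f [K [_ m1 m2 [m3 tv]]]]] : exists (V : {set 'I_s + 'I_s}) (f : rel ('I_s + 'I_s)) (K : nat -> bool),
    [/\ inl j1 \in V, inr j1 \in V, inr j2 \in V & inl i \in V /\ tinv KB C V f K].
    apply: (@tree3 _ _ _ _ _ _ _ (inl j1) (inr j1)); side;
    rewrite ?inE /= ?(inj_eq (@inl_inj _ _)) ?(inj_eq (@inr_inj _ _)) ?eqxx ?orbT ?orTb ?n12 ?n12' ?ni ?cmp_eq ?(cmp_lt h12) ?(cmp_gt h1i) //.
  by exists V, f, K.
have cm := cmp_midB h12 hi1 hi2; rewrite eq_sym in cm.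
have [V [f [K [m0 m1 m2 tv]]]] : exists (V : {set 'I_s + 'I_s}) (f : rel ('I_s + 'I_s)) (K : nat -> bool),
  [/\ inl i \in V, inr j1 \in V, inr j2 \in V & tinv KB C V f K].
  apply: (@tree2 _ _ _ _ _ _ (inl i)); side; rewrite ?inE /= ?(inj_eq (@inl_inj _ _)) ?(inj_eq (@inr_inj _ _)) ?eqxx ?orbT ?orTb ?n12 ?n12' //; exact: cm.
by exists V, f, K.
Qed.

Lemma kbip_good : good KB C 3.
Proof.
apply: Q_good.
  split; first exact: (@ck_sym s).
  by case=> x; case=> y //= _; rewrite /cmp; case: ifP => //; case: ifP.
have sQ12 := @Q12 _ KB C; have sQ23 := @Q23 _ KB C.
case=> a; case=> b; case=> d /= ab ad bd.
- by apply: (sort3 (val := fun i : 'I_s => nat_of_ord i) (P := fun x y z => Q KB C (inl x) (inl y) (inl z)))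
    => // x y z; [apply: (sQ12)|apply: (sQ23)|apply: QA].
- by apply: (sort2 (val := fun i : 'I_s => nat_of_ord i) (P := fun x y => Q KB C (inl x) (inl y) (inr d)))
    => // x y; [apply: (sQ12)|apply: QC].
- apply: (sQ23).
  by apply: (sort2 (val := fun i : 'I_s => nat_of_ord i) (P := fun x y => Q KB C (inl x) (inl y) (inr b)))
    => // x y; [apply: (sQ12)|apply: QC].
- by apply: (sort2 (val := fun i : 'I_s => nat_of_ord i) (P := fun x y => Q KB C (inl a) (inr x) (inr y)))
    => // x y; [apply: (sQ23)|apply: QD].
- apply: (sQ12); apply: (sQ23).
  by apply: (sort2 (val := fun i : 'I_s => nat_of_ord i) (P := fun x y => Q KB C (inl x) (inl y) (inr a)))
    => // x y; [apply: (sQ12)|apply: QC].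
- apply: (sQ12).
  by apply: (sort2 (val := fun i : 'I_s => nat_of_ord i) (P := fun x y => Q KB C (inl b) (inr x) (inr y)))
    => // x y; [apply: (sQ23)|apply: QD].
- apply: (sQ23); apply: (sQ12).
  by apply: (sort2 (val := fun i : 'I_s => nat_of_ord i) (P := fun x y => Q KB C (inl d) (inr x) (inr y)))
    => // x y; [apply: (sQ23)|apply: QD].
- by apply: (sort3 (val := fun i : 'I_s => nat_of_ord i) (P := fun x y z => Q KB C (inr x) (inr y) (inr z)))
    => // x y z; [apply: (sQ12)|apply: (sQ23)|apply: QB].
Qed.

End KbipS.

Lemma pick3 (T : finType) (X : {set T}) : 3 <= #|X| ->
  exists x y z, [/\ x \in X, y \in X, z \in X & [/\ x != y, x != z & y != z]].
Proof.
rewrite cardE; have := enum_uniq (mem X).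
case E: (enum X) => [|x [|y [|z s]]] //= .
rewrite !inE !negb_or => /andP[/andP[xy /andP[xz _]] /andP[/andP[yz _] _]] _.
have mX : forall u, (u \in X) = (u \in enum X) by move=> u; rewrite mem_enum.
exists x, y, z; rewrite !mX E !inE !eqxx ?orbT; split=> //.
Qed.

Lemma tri_from (T : finType) (r : rel T) (v : T) (beta : bool) (X : {set T}) :
  symmetric r -> (forall u, u \in X -> (u != v) && (r v u == beta)) -> 3 <= #|X| ->
  exists a b d, [/\ a != b, a != d, b != d, r a b = r a d & r a b = r b d].
Proof.
move=> rs HX /pick3 [x [y [z [xX yX zX [xy xz yz]]]]].
move: (HX _ xX) (HX _ yX) (HX _ zX) => /andP[xv /eqP rx] /andP[yv /eqP ry] /andP[zv /eqP rz].
rewrite eq_sym in xv; rewrite eq_sym in yv; rewrite eq_sym in zv.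
clear HX.
case exy: (r x y == beta).
  by exists v, x, y; split=> //; rewrite ?rx ?ry // (eqP exy).
case exz: (r x z == beta).
  by exists v, x, z; split=> //; rewrite ?rx ?rz // (eqP exz).
case eyz: (r y z == beta).
  by exists v, y, z; split=> //; rewrite ?ry ?rz // (eqP eyz).
have nb : forall w : bool, (w == beta) = false -> w = ~~ beta.
  by move=> w; case: w; case: (beta).
exists x, y, z; split=> //; by rewrite ?(nb _ exy) ?(nb _ exz) ?(nb _ eyz).
Qed.

Lemma ramsey (T : finType) (r : rel T) : symmetric r -> 6 <= #|T| ->
  exists a b d, [/\ a != b, a != d, b != d, r a b = r a d & r a b = r b d].
Proof.
move=> rs T6; have /card_gt0P [v _] : 0 < #|T| by apply: leq_trans T6.
pose A := [set: T] :\ v; pose B := [set u | r v u].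
have cA : #|A| = #|T| - 1.
  rewrite /A; move: (cardsD1 v [set: T]); rewrite cardsT inE /=.
  lia.
have := cardsID B A; rewrite cA => cs.
case: (leqP 3 #|A :&: B|) => h.
  apply: (tri_from (v := v) (beta := true) rs _ h) => u; rewrite !inE andbT.
  by case/andP=> -> ->.
have h2 : 3 <= #|A :\: B| by move: cs h T6; clear; lia.
apply: (tri_from (v := v) (beta := false) rs _ h2).
by move=> u; rewrite !inE andbT eqbF_neg => /andP[-> ->].
Qed.

Lemma mono_pair (T : finType) (r : rel T) a b d u v : symmetric r ->
  r a b = r a d -> r a b = r b d -> u \in [set a; b; d] -> v \in [set a; b; d] -> u != v ->
  r u v = r a b.
Proof.
move=> rs e1 e2; rewrite !inE -!orbA => /or3P[] /eqP-> /or3P[] /eqP->;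
  rewrite ?eqxx // => _; first [by [] | by rewrite e1 | by rewrite e2 | by rewrite rs | by rewrite rs e1 | by rewrite rs e2 | by rewrite -e1 | by rewrite -e1 e2 | by rewrite rs -e1 e2].
Qed.

Lemma c01eq (m n : nat) : m < 2 -> n < 2 -> (m == 0) = (n == 0) -> m = n.
Proof. by case: m => [|[|m]] //; case: n => [|[|n]]. Qed.

Lemma lb3 (T : finType) (g : rel T) c k : simple_graph g -> 6 <= #|T| -> good g c k -> 3 <= k.
Proof.
move=> [gi gs] T6 [[cs ck] tri].
rewrite leqNgt; apply/negP => k3.
have c01 : forall x y, g x y -> c x y < 2.
  move=> x y gxy; have := ck _ _ gxy; move: k3; lia.
pose r := fun u v => g u v && (c u v == 0).
have rs : symmetric r by move=> u v; rewrite /r gs cs.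
have [a [b [d [ab ad bd e1 e2]]]] := ramsey rs T6.
have S3 := cards3d ab ad bd.
have [V [f [sV [[fg fsym] fin fcon fcard finj]]]] := tri _ S3.
have fne : forall x y, f x y -> x != y.
  move=> x y /fg; apply: contraTneq => ->; by rewrite gi.
pose E := [set e : T * T | f e.1 e.2].
have E4 : #|E| <= 4.
  pose phi := fun e : T * T => (c e.1 e.2 == 0, (enum_rank e.1 < enum_rank e.2)%N).
  have inj : {in E &, injective phi}.
    move=> [x y] [u v]; rewrite !inE /= => fxy fuv [h1 h2].
    have ceq := c01eq (c01 _ _ (fg _ _ fxy)) (c01 _ _ (fg _ _ fuv)) h1.
    case: (finj _ _ _ _ fxy fuv ceq) => [[-> ->]|[ex ey]] //.
    subst x y; exfalso; move: h2 (fne _ _ fxy).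
    case: (ltngtP (enum_rank v) (enum_rank u)) => // /val_inj /enum_rank_inj ->.
    by rewrite eqxx.
  rewrite -(card_in_imset inj); apply: leq_trans (max_card _) _.
  by rewrite card_prod card_bool.
have V3 : #|V| <= 3 by move: E4; rewrite /E fcard; lia.
have VS : V = [set a; b; d].
  by apply/eqP; rewrite eq_sym eqEcard sV S3.
have E4' : #|E| = 4 by rewrite /E fcard VS S3.
have /card_gt0P [e1' e1E] : 0 < #|E| by rewrite E4'.
pose E' := E :\ e1' :\ (e1'.2, e1'.1).
have E'2 : 0 < #|E'|.
  move: (cardsD1 e1' E) (cardsD1 (e1'.2, e1'.1) (E :\ e1')); rewrite E4'.
  case: (e1' \in E); case: ((e1'.2, e1'.1) \in E :\ e1'); rewrite /E'; lia.
have /card_gt0P [e2' e2E] := E'2.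
move: e2E; rewrite !inE => /andP[n21 /andP[n1 fe2]].
move: e1E; rewrite inE => fe1.
have cne : c e1'.1 e1'.2 != c e2'.1 e2'.2.
  apply/eqP => /(finj _ _ _ _ fe1 fe2) [[h1 h2]|[h1 h2]].
  - by move: n1; case: (e1') (e2') h1 h2 => ? ? [? ?] /= -> ->; rewrite eqxx.
  - by move: n21; case: (e1') (e2') h1 h2 => ? ? [? ?] /= -> ->; rewrite eqxx.
have inS : forall x y, f x y -> (x \in [set a; b; d]) && (y \in [set a; b; d]) by rewrite -VS.
move: (inS _ _ fe1) (inS _ _ fe2) => /andP[x1 y1] /andP[x2 y2].
have r1 := mono_pair rs e1 e2 x1 y1 (fne _ _ fe1).
have r2 := mono_pair rs e1 e2 x2 y2 (fne _ _ fe2).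
move: r1 r2; rewrite /r (fg _ _ fe1) (fg _ _ fe2) /= => r1 r2.
move: cne; rewrite (c01eq (c01 _ _ (fg _ _ fe1)) (c01 _ _ (fg _ _ fe2))) ?eqxx //.
by rewrite r1 r2.
Qed.

Lemma Kbip_conn s t : 0 < s -> 0 < t -> connected (Kbip s t).
Proof.
move=> s0 t0; pose i0 : 'I_s := Ordinal s0; pose j0 : 'I_t := Ordinal t0.
case=> x; case=> y.
- by apply: (@connect_trans _ _ (inr j0)); apply: connect1.
- exact: connect1.
- exact: connect1.
- by apply: (@connect_trans _ _ (inl i0)); apply: connect1.
Qed.

Lemma join_conn (T1 T2 : finType) (g : rel T1) (h : rel T2) (x0 : T1) (y0 : T2) :
  connected (join g h).
Proof.
case=> x; case=> y.
- by apply: (@connect_trans _ _ (inr y0)); apply: connect1.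
- exact: connect1.
- exact: connect1.
- by apply: (@connect_trans _ _ (inl x0)); apply: connect1.
Qed.

Lemma kbip_join (T1 T2 : finType) (g : rel T1) (h : rel T2) k :
  rx3_ok (Kbip #|T1| #|T2|) k -> 3 <= #|T1| + #|T2| -> rx3_ok (join g h) k.
Proof.
move=> [cK gd] T3.
have k0 : 0 < k by apply: good_pos gd; rewrite card_sum !card_ord.
pose phi := fun u : 'I_#|T1| + 'I_#|T2| =>
  match u with inl i => (inl (enum_val i) : T1 + T2) | inr j => inr (enum_val j) end.
pose psi := fun u : T1 + T2 =>
  match u with inl x => (inl (enum_rank x) : 'I_#|T1| + 'I_#|T2|) | inr y => inr (enum_rank y) end.
have phiK : cancel phi psi by case=> i /=; rewrite enum_valK.
have psiK : cancel psi phi by case=> x /=; rewrite enum_rankK.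
have hom : forall a b, Kbip #|T1| #|T2| a b -> join g h (phi a) (phi b) by case=> ?; case.
eexists; exact: (good_transfer phiK psiK (@Kbip_sym _ _) hom k0 gd).
Qed.

Lemma rx3_spec (T : finType) (g : rel T) : (exists k, rx3_ok g k) -> rx3_ok g (rx3 g).
Proof. exact: least_P. Qed.

Lemma rx3_Kss s : 3 <= s -> rx3 (Kbip s s) = 3.
Proof.
move=> s3; apply/eqP; rewrite eqn_leq; apply/andP; split.
  by apply: least_le; exists (@ck s); apply: kbip_good.
have [c gd] := rx3_spec (ex_intro _ 3 (ex_intro _ (@ck s) (kbip_good s))).
apply: lb3 (Kbip_simple s s) _ gd.
by rewrite card_sum !card_ord; lia.
Qed.

Theorem theorem8 (T1 T2 : finType) (g : rel T1) (h : rel T2) :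
  simple_graph g -> simple_graph h ->
  connected g -> connected h ->
  ~ (complete g /\ complete h) ->
  #|T1| <= #|T2| -> 3 <= #|T2| ->
  [/\ (#|T1| = 1 -> rx3 (join g h) <= rx3 h + 1),
      (#|T1| = 2 ->
         rx3 (join g h) <= minn (rc h + 3) (rx3 (Kbip #|T1| #|T2|))),
      (3 <= #|T1| ->
         rx3 (join g h) <= minn (maxn (rx3 g) (rx3 h) + 1) (rx3 (Kbip #|T1| #|T2|)))
    & (3 <= #|T1| -> #|T1| = #|T2| ->
         rx3 (join g h) = rx3 (Kbip #|T1| #|T2|) /\ rx3 (Kbip #|T1| #|T2|) = 3)].
Proof.
move=> sg sh cg ch _ le12 T23.
have okh := rx3_spec (rx3_exists sh ch).
have okK : 0 < #|T1| -> rx3_ok (Kbip #|T1| #|T2|) (rx3 (Kbip #|T1| #|T2|)).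
  move=> T10; apply: rx3_spec; apply: rx3_exists; first exact: Kbip_simple.
  by apply: Kbip_conn => //; lia.
have KJ : 0 < #|T1| -> rx3 (join g h) <= rx3 (Kbip #|T1| #|T2|).
  move=> T10; apply: least_le; apply: kbip_join; [exact: okK | lia].
split.
- move=> T11; apply: least_le; rewrite addn1; exact: part1.
- move=> T12; rewrite leq_min; apply/andP; split; last by apply: KJ; rewrite T12.
  apply: least_le; apply: part2 => //; exact: least_P (rc_exists sh ch).
- move=> T13; rewrite leq_min; apply/andP; split; last by apply: KJ; lia.
  apply: least_le; rewrite addn1; apply: part3 => //.
  exact: rx3_spec (rx3_exists sg cg).
- move=> T13 e12.
  have K3 : rx3 (Kbip #|T1| #|T2|) = 3 by rewrite -e12; apply: rx3_Kss.
  split=> //; rewrite K3; apply/eqP; rewrite eqn_leq; apply/andP; split.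
    by rewrite -K3; apply: KJ; lia.
  have okJ : rx3_ok (join g h) (rx3 (Kbip #|T1| #|T2|)).
    apply: kbip_join; [apply: okK; lia | lia].
  have [c gd] := rx3_spec (ex_intro _ _ okJ).
  apply: lb3 (join_simple sg sh) _ gd.
  by rewrite card_sum; lia.
Qed.
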